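(* Let $d \geq 2$ and $n_1,\dots,n_d \geq 1$ be integers, and let $G_1$ and $G_2$ be graphs with non-empty vertex sets and maximum degrees $\Delta_1$ and $\Delta_2$ respectively. Then $K_{n_1,\dots,n_d}$ is isomorphic to a subgraph of $G_1 \square G_2$ if and only if at least one of the following holds: (i) $K_{n_1,\dots,n_d}$ is isomorphic to a subgraph of $G_1$ or of $G_2$; (ii) $d=2$, $(n_1,n_2)=(2,2)$, and both $G_1$ and $G_2$ contain at least one edge; (iii) $d=2$, $\{n_1,n_2\}=\{1,s\}$ for some integer $s\geq 1$, and $\Delta_1+\Delta_2 \geq s$.
   Context: The cartesian product $G_1 \square G_2$ has vertex set $V(G_1)\times V(G_2)$, with $(a,v)(b,u)$ an edge iff either $ab\in E(G_1)$ and $u=v$, or $uv\in E(G_2)$ and $a=b$. $K_{n_1,\dots,n_d}$ denotes the complete $d$-partite graph with parts of sizes $n_1,\dots,n_d$. *)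

(* Defs.v *)
From mathcomp Require Import all_boot.
Set Implicit Arguments. Unset Strict Implicit. Unset Printing Implicit Defensive.

Definition simple_graph (V : finType) (e : rel V) : Prop :=
  symmetric e /\ irreflexive e.

Definition deg (V : finType) (e : rel V) (v : V) : nat := #|[set u | e v u]|.
Definition maxdeg (V : finType) (e : rel V) : nat := \max_(v : V) deg e v.

Definition subgraph_iso (W V : finType) (eH : rel W) (eG : rel V) : Prop :=
  exists f : W -> V, injective f /\ forall x y, eH x y -> eG (f x) (f y).

(* complete d-partite graph K_{n_1,...,n_d}: vertices are pairs (i, k) with
   k < n i, adjacent iff they lie in different parts *)
Definition Kmp_vert (d : nat) (n : 'I_d -> nat) : finType :=
  {i : 'I_d & 'I_(n i)}.
Definition Kmp_rel (d : nat) (n : 'I_d -> nat) : rel (Kmp_vert n) :=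
  fun x y => tag x != tag y.

Definition cart_rel (V1 V2 : finType) (e1 : rel V1) (e2 : rel V2)
  : rel (V1 * V2) :=
  fun p q => (e1 p.1 q.1 && (p.2 == q.2)) || (e2 p.2 q.2 && (p.1 == q.1)).

Definition has_edge (V : finType) (e : rel V) : Prop := exists x y, e x y.

(* Main.v *)
Require Import Defs.
From mathcomp Require Import all_boot zify.
Set Implicit Arguments. Unset Strict Implicit. Unset Printing Implicit Defensive.

Lemma irr1 (V : finType) (e : rel V) : simple_graph e -> forall a, e a a = false.
Proof. by case=> _ h a; rewrite h. Qed.

Lemma cart_cases (V1 V2 : finType) (e1 : rel V1) (e2 : rel V2) p q :
  cart_rel e1 e2 p q -> (e1 p.1 q.1 /\ p.2 = q.2) \/ (e2 p.2 q.2 /\ p.1 = q.1).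
Proof. by rewrite /cart_rel => /orP[/andP[h /eqP]|/andP[h /eqP]]; [left|right]. Qed.

Lemma cart_swap (V1 V2 : finType) (e1 : rel V1) (e2 : rel V2) p q :
  cart_rel e1 e2 p q = cart_rel e2 e1 (p.2, p.1) (q.2, q.1).
Proof. by rewrite /cart_rel /= orbC. Qed.

Lemma cart_sym (V1 V2 : finType) (e1 : rel V1) (e2 : rel V2) :
  simple_graph e1 -> simple_graph e2 -> forall p q,
  cart_rel e1 e2 p q -> cart_rel e1 e2 q p.
Proof.
case=> s1 _ [s2 _] p q; rewrite /cart_rel (s1 p.1) (s2 p.2) (eq_sym p.1) (eq_sym p.2).
done.
Qed.

Lemma t1 (V1 V2 : finType) (e1 : rel V1) (e2 : rel V2) p q :
  simple_graph e2 -> cart_rel e1 e2 p q -> p.2 = q.2 -> e1 p.1 q.1.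
Proof.
move=> s2 /cart_cases [[]//|[h _] E]; by rewrite E irr1 in h.
Qed.

Lemma t2 (V1 V2 : finType) (e1 : rel V1) (e2 : rel V2) p q :
  simple_graph e1 -> cart_rel e1 e2 p q -> p.1 = q.1 -> e2 p.2 q.2.
Proof.
move=> s1 /cart_cases [[h _] E|[]//]; by rewrite E irr1 in h.
Qed.

Lemma CN (V1 V2 : finType) (e1 : rel V1) (e2 : rel V2) (p r w : V1 * V2) :
  p.1 != r.1 -> p.2 != r.2 -> cart_rel e1 e2 p w -> cart_rel e1 e2 r w ->
  w = (p.1, r.2) \/ w = (r.1, p.2).
Proof.
case: p r w => [p1 p2] [r1 r2] [w1 w2] /= n1 n2.
move=> /cart_cases[[_ /= E1]|[_ /= E1]] /cart_cases[[_ /= E2]|[_ /= E2]]; subst.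
- by rewrite eqxx in n2.
- by right.
- by left.
- by rewrite eqxx in n1.
Qed.

Lemma tri (V1 V2 : finType) (e1 : rel V1) (e2 : rel V2) (x y z : V1 * V2) :
  simple_graph e1 -> simple_graph e2 ->
  cart_rel e1 e2 x y -> cart_rel e1 e2 y z -> cart_rel e1 e2 x z ->
  (x.2 = y.2 /\ y.2 = z.2) \/ (x.1 = y.1 /\ y.1 = z.1).
Proof.
case: x y z => [x1 x2] [y1 y2] [z1 z2] s1 s2.
move=> /cart_cases[[h1 /= E1]|[h1 /= E1]] /cart_cases[[h2 /= E2]|[h2 /= E2]]
   /cart_cases[[h3 /= E3]|[h3 /= E3]] /=; subst; auto;
  rewrite ?irr1 // in h1 h2 h3.
Qed.

Lemma le2 (m : nat) (T : finType) (g : 'I_m -> T) (a b : T) :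
  injective g -> (forall k, g k = a \/ g k = b) -> m <= 2.
Proof.
move=> gi hg.
have : #|g @: [set: 'I_m]| <= #|[set a; b]|.
  apply: subset_leq_card; apply/subsetP => _ /imsetP[k _ ->].
  by rewrite !inE; case: (hg k) => ->; rewrite eqxx ?orbT.
rewrite card_imset // cardsT card_ord cards2 => h.
by apply: (leq_trans h); case: (a != b).
Qed.

Definition nbr (V1 V2 : finType) (e1 : rel V1) (e2 : rel V2) (p : V1 * V2) :=
  [set q | cart_rel e1 e2 p q].

Lemma nbr_le (V1 V2 : finType) (e1 : rel V1) (e2 : rel V2) a b :
  #|nbr e1 e2 (a, b)| <= deg e1 a + deg e2 b.
Proof.
have sub : nbr e1 e2 (a, b) \subset
   ((fun u => (u, b)) @: [set u | e1 a u]) :|: ((fun w => (a, w)) @: [set w | e2 b w]).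
  apply/subsetP => -[u w]; rewrite inE => /cart_cases[[h /= E]|[h /= E]]; subst.
  - by rewrite inE imset_f ?inE.
  - by rewrite inE [X in _ || X]imset_f ?orbT ?inE.
apply: (leq_trans (subset_leq_card sub)); apply: (leq_trans (leq_card_setU _ _)).
by apply: leq_add; apply: leq_imset_card.
Qed.

Lemma nbr_ge (V1 V2 : finType) (e1 : rel V1) (e2 : rel V2) a b :
  simple_graph e1 -> simple_graph e2 ->
  deg e1 a + deg e2 b <= #|nbr e1 e2 (a, b)|.
Proof.
move=> s1 s2.
set A := (fun u => (u, b)) @: [set u | e1 a u].
set B := (fun w => (a, w)) @: [set w | e2 b w].
have cA : #|A| = deg e1 a by rewrite card_imset // => x y [].
have cB : #|B| = deg e2 b by rewrite card_imset // => x y [].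
have dis : A :&: B = set0.
  apply/setP => -[u w]; rewrite !inE; apply/negP => /andP[/imsetP[x hx [E1 E2]] /imsetP[y hy [E3 E4]]].
  subst; rewrite inE irr1 // in hx.
have sub : A :|: B \subset nbr e1 e2 (a, b).
  apply/subsetP => -[u w]; rewrite !inE => /orP[/imsetP[x hx [-> ->]]|/imsetP[x hx [-> ->]]];
  rewrite inE in hx; by rewrite /cart_rel /= hx eqxx ?orbT.
by rewrite -cA -cB -cardsUI dis cards0 addn0 subset_leq_card.
Qed.

Lemma deg_max (V : finType) (e : rel V) v : deg e v <= maxdeg e.
Proof. exact: (leq_bigmax v). Qed.

Lemma maxdeg_ex (V : finType) (e : rel V) : 0 < #|V| -> exists v, maxdeg e = deg e v.
Proof. move=> h; case: (eq_bigmax (deg e) h) => v hv; by exists v. Qed.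

Lemma kv_eq d (n : 'I_d -> nat) (x y : Kmp_vert n) :
  tag x = tag y -> nat_of_ord (tagged x) = nat_of_ord (tagged y) -> x = y.
Proof.
case: x => i k; case: y => j l /= E; subst j => E.
by congr existT; apply: val_inj.
Qed.

Lemma kv_val d (n : 'I_d -> nat) (x y : Kmp_vert n) :
  x = y -> nat_of_ord (tagged x) = nat_of_ord (tagged y).
Proof. by move->. Qed.

Definition vtx d (n : 'I_d -> nat) (Hn : forall i, 1 <= n i) (i : 'I_d) : Kmp_vert n :=
  existT (fun i => 'I_(n i)) i (Ordinal (Hn i)).

Lemma I2 (a b c : 'I_2) : a != b -> c = a \/ c = b.
Proof.
move=> h; have : val a != val b by [].
case: a b c {h} => [a ha] [b hb] [c hc] /= h.
have : c = a \/ c = b by lia.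
by case=> E; subst; [left|right]; apply: val_inj.
Qed.

Lemma fiber_iso d (n : 'I_d -> nat) (V1 V2 : finType) (e1 : rel V1) (e2 : rel V2)
  (f : Kmp_vert n -> V1 * V2) c :
  simple_graph e2 -> injective f ->
  (forall x y, Kmp_rel x y -> cart_rel e1 e2 (f x) (f y)) ->
  (forall x, (f x).2 = c) -> subgraph_iso (@Kmp_rel d n) e1.
Proof.
move=> s2 fi fe fc; exists (fun x => (f x).1); split.
  move=> x y E; apply: fi; move: E (fc x) (fc y).
  by case: (f x) (f y) => [a b] [a' b'] /= -> -> ->.
move=> x y h; apply: (t1 s2 (fe _ _ h)); by rewrite !fc.
Qed.

Lemma swap_emb d (n : 'I_d -> nat) (V1 V2 : finType) (e1 : rel V1) (e2 : rel V2)
  (f : Kmp_vert n -> V1 * V2) :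
  injective f -> (forall x y, Kmp_rel x y -> cart_rel e1 e2 (f x) (f y)) ->
  injective (fun x => ((f x).2, (f x).1)) /\
  (forall x y, Kmp_rel x y -> cart_rel e2 e1 ((f x).2, (f x).1) ((f y).2, (f y).1)).
Proof.
move=> fi fe; split.
  move=> x y E; apply: fi; move: E; by case: (f x) (f y) => [a b] [a' b'] [-> ->].
by move=> x y h; rewrite -cart_swap; apply: fe.
Qed.

Lemma all_fiber d (n : 'I_d -> nat) (V1 V2 : finType) (e1 : rel V1) (e2 : rel V2)
  (f : Kmp_vert n -> V1 * V2) :
  simple_graph e1 -> simple_graph e2 -> injective f ->
  (forall x y, Kmp_rel x y -> cart_rel e1 e2 (f x) (f y)) ->
  forall a b c : Kmp_vert n, tag a != tag b -> tag b != tag c -> tag a != tag c ->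
  (f a).2 = (f b).2 -> (f b).2 = (f c).2 -> forall x, (f x).2 = (f a).2.
Proof.
move=> s1 s2 fi fe.
have key : forall u v x, tag u != tag v -> tag x != tag u -> tag x != tag v ->
    (f u).2 = (f v).2 -> (f x).2 = (f u).2.
  move=> u v x nuv nxu nxv E.
  case: (tri s1 s2 (fe _ _ nxu) (fe _ _ nuv) (fe _ _ nxv)) => [[-> _] //|[_ E']].
  have : f u = f v by move: E E'; case: (f u) (f v) => [? ?] [? ?] /= -> ->.
  by move/fi => ex; rewrite ex eqxx in nuv.
move=> a b c nab nbc nac Eab Ebc x.
case: (eqVneq (tag x) (tag a)) => [xa|xa].
  by rewrite (key b c x) // ?Eab // xa.
case: (eqVneq (tag x) (tag b)) => [xb|xb].
  by rewrite (key a c x) // ?Eab // xb // eq_sym.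
by rewrite (key a b x).
Qed.

Lemma e_neq (V : finType) (e : rel V) a b : simple_graph e -> e a b -> a != b.
Proof. by move=> s h; apply/eqP => E; rewrite E irr1 in h. Qed.

Lemma fwd3 d (n : 'I_d -> nat) (Hn : forall i, 1 <= n i) (V1 V2 : finType)
  (e1 : rel V1) (e2 : rel V2) (f : Kmp_vert n -> V1 * V2) :
  3 <= d -> simple_graph e1 -> simple_graph e2 -> injective f ->
  (forall x y, Kmp_rel x y -> cart_rel e1 e2 (f x) (f y)) ->
  subgraph_iso (@Kmp_rel d n) e1 \/ subgraph_iso (@Kmp_rel d n) e2.
Proof.
move=> d3 s1 s2 fi fe.
have h0 : 0 < d by lia. have h1 : 1 < d by lia. have h2 : 2 < d by lia.
set a := vtx Hn (Ordinal h0); set b := vtx Hn (Ordinal h1); set c := vtx Hn (Ordinal h2).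
have nab : tag a != tag b by []. have nbc : tag b != tag c by [].
have nac : tag a != tag c by [].
case: (tri s1 s2 (fe _ _ nab) (fe _ _ nbc) (fe _ _ nac)) => [[E1 E2]|[E1 E2]].
  left; apply: (fiber_iso (c := (f a).2) s2 fi fe).
  exact: (all_fiber s1 s2 fi fe nab nbc nac E1 E2).
right; case: (swap_emb fi fe) => fi' fe'.
apply: (fiber_iso (c := (f a).1) s1 fi' fe').
exact: (all_fiber (f := fun x => ((f x).2, (f x).1)) s2 s1 fi' fe' nab nbc nac E1 E2).
Qed.

Lemma star_fwd d (n : 'I_d -> nat) (Hn : forall i, 1 <= n i) (V1 V2 : finType)
  (e1 : rel V1) (e2 : rel V2) (f : Kmp_vert n -> V1 * V2) (i j : 'I_d) :
  i != j -> injective f ->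
  (forall x y, Kmp_rel x y -> cart_rel e1 e2 (f x) (f y)) ->
  n j <= maxdeg e1 + maxdeg e2.
Proof.
move=> nij fi fe.
set u := vtx Hn i.
pose g (k : 'I_(n j)) := f (existT (fun i => 'I_(n i)) j k).
have gi : injective g.
  move=> k l /fi /kv_val /= E; exact: val_inj.
have : #|g @: [set: 'I_(n j)]| <= #|nbr e1 e2 (f u)|.
  apply: subset_leq_card; apply/subsetP => _ /imsetP[k _ ->].
  by rewrite inE; apply: fe.
rewrite card_imset // cardsT card_ord => h.
apply: (leq_trans h); case: (f u) => p1 p2.
apply: (leq_trans (nbr_le _ _ _ _)); apply: leq_add; exact: deg_max.
Qed.

Lemma mixed (n : 'I_2 -> nat) (Hn : forall i, 2 <= n i) (V1 V2 : finType)
  (e1 : rel V1) (e2 : rel V2) (f : Kmp_vert n -> V1 * V2) :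
  simple_graph e1 -> simple_graph e2 -> injective f ->
  (forall x y, Kmp_rel x y -> cart_rel e1 e2 (f x) (f y)) ->
  forall u v w : Kmp_vert n, tag v = tag w -> tag u != tag v ->
  (f u).2 = (f v).2 -> (f u).1 = (f w).1 ->
  (forall i, n i = 2) /\ has_edge e1 /\ has_edge e2.
Proof.
move=> s1 s2 fi fe u v w Evw nuv Euv Euw.
have nuw : tag u != tag w by rewrite -Evw.
have h1 := t1 s2 (fe _ _ nuv) Euv.
have h2 := t2 s1 (fe _ _ nuw) Euw.
have d1 : (f v).1 != (f w).1 by rewrite -Euw eq_sym (e_neq s1 h1).
have d2 : (f v).2 != (f w).2 by rewrite -Euv (e_neq s2 h2).
have fuE : f u = ((f w).1, (f v).2) by rewrite -Euw -Euv -surjective_pairing.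
set A := tag u; set B := tag v.
have nAB : A != B by [].
have partA : forall k : 'I_(n A), f (existT (fun i => 'I_(n i)) A k) = ((f v).1, (f w).2) \/
                                 f (existT (fun i => 'I_(n i)) A k) = f u.
  move=> k; rewrite fuE; apply: CN d1 d2 _ _; apply: fe; rewrite /Kmp_rel /=.
    by rewrite eq_sym.
  by rewrite -Evw eq_sym.
have lA : n A <= 2.
  apply: (le2 (g := fun k => f (existT (fun i => 'I_(n i)) A k))) partA.
  by move=> k l /fi /kv_val /= E; apply: val_inj.
have nA2 : n A = 2 by have := Hn A; lia.
have hA1 : 1 < n A by rewrite nA2.
pose k0 : 'I_(n A) := if nat_of_ord (tagged u) == 0 then Ordinal hA1 else Ordinal (ltnW hA1).
set u' := existT (fun i => 'I_(n i)) A k0.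
have fu' : f u' = ((f v).1, (f w).2).
  case: (partA k0) => // /fi /kv_val /=; rewrite /k0.
  by case: eqP => h /= E; [rewrite h in E | rewrite -E in h].
have partB : forall k : 'I_(n B), f (existT (fun i => 'I_(n i)) B k) = f w \/
                                 f (existT (fun i => 'I_(n i)) B k) = f v.
  move=> k.
  have := @CN _ _ e1 e2 (f u) (f u') (f (existT (fun i => 'I_(n i)) B k)).
  rewrite fu' fuE /= -!surjective_pairing; apply => //; first by rewrite eq_sym.
    by rewrite -fuE; apply: fe.
  by rewrite -fu'; apply: fe.
have lB : n B <= 2.
  apply: (le2 (g := fun k => f (existT (fun i => 'I_(n i)) B k))) partB.
  by move=> k l /fi /kv_val /= E; apply: val_inj.
split; last by split; [exists (f u).1, (f v).1 | exists (f u).2, (f w).2].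
move=> i; case: (I2 i nAB) => ->; first by [].
by have := Hn B; lia.
Qed.

Lemma fwd2a (n : 'I_2 -> nat) (Hn1 : forall i, 1 <= n i) (Hn : forall i, 2 <= n i)
  (V1 V2 : finType)
  (e1 : rel V1) (e2 : rel V2) (f : Kmp_vert n -> V1 * V2) :
  simple_graph e1 -> simple_graph e2 -> injective f ->
  (forall x y, Kmp_rel x y -> cart_rel e1 e2 (f x) (f y)) ->
  (f (vtx Hn1 ord0)).2 = (f (vtx Hn1 ord_max)).2 ->
  subgraph_iso (@Kmp_rel 2 n) e1 \/
  ((forall i, n i = 2) /\ has_edge e1 /\ has_edge e2).
Proof.
move=> s1 s2 fi fe E0.
set x0 := vtx Hn1 ord0; set y0 := vtx Hn1 ord_max.
have n01 : (ord0 : 'I_2) != ord_max by [].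
case: (pickP (fun z => (f z).2 != (f x0).2)) => [z hz|none]; last first.
  left; apply: (fiber_iso (c := (f x0).2) s2 fi fe) => z.
  by have := none z => /negbFE /eqP.
right; case: (I2 (tag z) n01) => tz.
- have nyz : Kmp_rel y0 z by move: tz; rewrite /Kmp_rel => ->.
  case/cart_cases: (fe _ _ nyz) => [[_ E]|[_ E]].
    by rewrite -E -E0 eqxx in hz.
  apply: (mixed Hn s1 s2 fi fe (u := y0) (v := x0) (w := z) _ _ _ E) => //.
- have nxz : Kmp_rel x0 z by move: tz; rewrite /Kmp_rel => ->.
  case/cart_cases: (fe _ _ nxz) => [[_ E]|[_ E]].
    by rewrite -E eqxx in hz.
  apply: (mixed Hn s1 s2 fi fe (u := x0) (v := y0) (w := z) _ _ E0 E) => //.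
Qed.

Lemma fwd2 (n : 'I_2 -> nat) (Hn1 : forall i, 1 <= n i)
  (V1 V2 : finType)
  (e1 : rel V1) (e2 : rel V2) (f : Kmp_vert n -> V1 * V2) :
  simple_graph e1 -> simple_graph e2 -> injective f ->
  (forall x y, Kmp_rel x y -> cart_rel e1 e2 (f x) (f y)) ->
  [\/ subgraph_iso (@Kmp_rel 2 n) e1 \/ subgraph_iso (@Kmp_rel 2 n) e2,
      2 = 2 /\ (forall i, n i = 2) /\ has_edge e1 /\ has_edge e2
    | 2 = 2 /\ exists s, 1 <= s /\
        (exists i j : 'I_2, i != j /\ n i = 1 /\ n j = s) /\
        s <= maxdeg e1 + maxdeg e2].
Proof.
move=> s1 s2 fi fe.
have n01 : (ord0 : 'I_2) != ord_max by [].
case: (eqVneq (n ord0) 1) => [h0|h0].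
  apply: Or33; split => //; exists (n ord_max); split; first exact: Hn1.
  split; last exact: (star_fwd Hn1 n01 fi fe).
  by exists ord0, ord_max.
case: (eqVneq (n ord_max) 1) => [h1|h1].
  apply: Or33; split => //; exists (n ord0); split; first exact: Hn1.
  split; last by apply: (star_fwd Hn1 (i := ord_max) (j := ord0) _ fi fe); rewrite eq_sym.
  by exists ord_max, ord0; rewrite eq_sym.
have Hn : forall i, 2 <= n i.
  move=> i; case: (I2 i n01) => ->; have := Hn1 ord0; have := Hn1 ord_max; lia.
have nxy : Kmp_rel (vtx Hn1 ord0) (vtx Hn1 ord_max) by [].
case/cart_cases: (fe _ _ nxy) => [[_ E]|[_ E]].
  case: (fwd2a Hn s1 s2 fi fe E) => [h|[? ?]]; [apply: Or31; left | apply: Or32] => //.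
case: (swap_emb fi fe) => fi' fe'.
case: (fwd2a (f := fun x => ((f x).2, (f x).1)) Hn s2 s1 fi' fe' E) =>
   [h|[? [? ?]]]; [apply: Or31; right | apply: Or32] => //.
Qed.

Lemma bwd1 (W V1 V2 : finType) (eK : rel W) (e1 : rel V1) (e2 : rel V2) :
  0 < #|V2| -> subgraph_iso eK e1 -> subgraph_iso eK (cart_rel e1 e2).
Proof.
case/card_gt0P => b _ [g [gi ge]]; exists (fun x => (g x, b)); split.
  by move=> x y [/gi].
by move=> x y h; rewrite /cart_rel /= ge // eqxx.
Qed.

Lemma bwd2 (W V1 V2 : finType) (eK : rel W) (e1 : rel V1) (e2 : rel V2) :
  0 < #|V1| -> subgraph_iso eK e2 -> subgraph_iso eK (cart_rel e1 e2).
Proof.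
case/card_gt0P => a _ [g [gi ge]]; exists (fun x => (a, g x)); split.
  by move=> x y [/gi].
by move=> x y h; rewrite /cart_rel /= ge // eqxx orbT.
Qed.

Lemma bwd_sq (n : 'I_2 -> nat) (V1 V2 : finType) (e1 : rel V1) (e2 : rel V2) :
  simple_graph e1 -> simple_graph e2 -> (forall i, n i = 2) ->
  has_edge e1 -> has_edge e2 -> subgraph_iso (@Kmp_rel 2 n) (cart_rel e1 e2).
Proof.
move=> s1 s2 hn [a1 [a2 ha]] [b1 [b2 hb]].
have ha' : e1 a2 a1 by case: s1 => S _; rewrite S.
have hb' : e2 b2 b1 by case: s2 => S _; rewrite S.
have na : a1 != a2 := e_neq s1 ha. have nb : b1 != b2 := e_neq s2 hb.
pose f (x : Kmp_vert n) : V1 * V2 :=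
  if tag x == ord0 then (if nat_of_ord (tagged x) == 0 then (a1, b1) else (a2, b2))
  else (if nat_of_ord (tagged x) == 0 then (a1, b2) else (a2, b1)).
have vt : forall x : Kmp_vert n, nat_of_ord (tagged x) < 2.
  by move=> x; apply: (leq_trans (ltn_ord (tagged x))); rewrite hn.
have tg : forall x : Kmp_vert n, tag x != ord0 -> tag x = ord_max.
  move=> x h; case: (I2 (tag x) (isT : (ord0 : 'I_2) != ord_max)) => // E.
  by rewrite E eqxx in h.
have tE : forall x y : Kmp_vert n, (tag x == ord0) = (tag y == ord0) -> tag x = tag y.
  move=> x y; case: (boolP (tag x == ord0)) => /= tx; case: (boolP (tag y == ord0)) => ty //= _.
    by rewrite (eqP tx) (eqP ty).
  by rewrite (tg x tx) (tg y ty).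
have kE : forall x y : Kmp_vert n, (nat_of_ord (tagged x) == 0) = (nat_of_ord (tagged y) == 0) ->
   nat_of_ord (tagged x) = nat_of_ord (tagged y).
  move=> x y; move: (vt x) (vt y); move: (nat_of_ord (tagged x)) (nat_of_ord (tagged y)) => p q.
  case: eqP; case: eqP => //; lia.
exists f; split.
  move=> x y; rewrite /f => E.
  apply: kv_eq; [apply: tE | apply: kE]; move: E;
  case: (tag x == ord0); case: (tag y == ord0);
  case: (nat_of_ord (tagged x) == 0); case: (nat_of_ord (tagged y) == 0) => //=;
  move=> /eqP; rewrite xpair_eqE => /andP[/eqP E1 /eqP E2];
  by rewrite ?E1 ?E2 ?eqxx in na nb.
move=> x y; rewrite /Kmp_rel /f.
case: (boolP (tag x == ord0)) => tx; case: (boolP (tag y == ord0)) => ty h.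
- by rewrite (eqP tx) (eqP ty) eqxx in h.
- by case: (nat_of_ord (tagged x) == 0); case: (nat_of_ord (tagged y) == 0);
    rewrite /cart_rel /= ?eqxx ?ha ?hb ?ha' ?hb' ?orbT.
- by case: (nat_of_ord (tagged x) == 0); case: (nat_of_ord (tagged y) == 0);
    rewrite /cart_rel /= ?eqxx ?ha ?hb ?ha' ?hb' ?orbT.
- by rewrite (tg x tx) (tg y ty) eqxx in h.
Qed.

Lemma bwd_star (n : 'I_2 -> nat) (V1 V2 : finType) (e1 : rel V1) (e2 : rel V2)
  (i j : 'I_2) (s : nat) :
  simple_graph e1 -> simple_graph e2 -> 0 < #|V1| -> 0 < #|V2| ->
  i != j -> n i = 1 -> n j = s -> s <= maxdeg e1 + maxdeg e2 ->
  subgraph_iso (@Kmp_rel 2 n) (cart_rel e1 e2).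
Proof.
move=> s1 s2 c1 c2 nij ni nj hs.
case: (maxdeg_ex e1 c1) => a ha; case: (maxdeg_ex e2 c2) => b hb.
set N := nbr e1 e2 (a, b).
have hN : s <= size (enum N).
  by rewrite -cardE; apply: (leq_trans hs); rewrite ha hb nbr_ge.
pose f (x : Kmp_vert n) : V1 * V2 :=
  if tag x == i then (a, b) else nth (a, b) (enum N) (nat_of_ord (tagged x)).
have tj : forall x : Kmp_vert n, tag x != i -> tag x = j.
  by move=> x h; case: (I2 (tag x) nij) => // E; rewrite E eqxx in h.
have vs : forall x : Kmp_vert n, tag x != i -> nat_of_ord (tagged x) < size (enum N).
  move=> x h; apply: (leq_trans _ hN); rewrite -nj -(tj x h); exact: ltn_ord.
have inN : forall x : Kmp_vert n, tag x != i -> cart_rel e1 e2 (a, b) (f x).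
  move=> x h; rewrite /f (negbTE h).
  have := mem_nth (a, b) (vs x h); rewrite mem_enum inE //.
have v0 : forall x : Kmp_vert n, tag x == i -> nat_of_ord (tagged x) = 0.
  move=> x h; have e : n (tag x) = 1 by rewrite (eqP h).
  move: (ltn_ord (tagged x)); move: (nat_of_ord (tagged x)) => p; rewrite e; lia.
have nab : ~~ cart_rel e1 e2 (a, b) (a, b) by rewrite /cart_rel /= (irr1 s1) (irr1 s2).
exists f; split.
  move=> x y E; case: (boolP (tag x == i)) => tx; case: (boolP (tag y == i)) => ty.
  - by apply: kv_eq; rewrite ?(eqP tx) ?(eqP ty) ?v0.
  - have := inN y ty; by rewrite -E /f tx in nab * => h; rewrite h in nab.
  - have := inN x tx; by rewrite E /f ty in nab * => h; rewrite h in nab.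
  - apply: kv_eq; first by rewrite (tj x tx) (tj y ty).
    move: E; rewrite /f (negbTE tx) (negbTE ty) => /eqP.
    by rewrite nth_uniq ?enum_uniq ?vs // => /eqP.
move=> x y; rewrite /Kmp_rel => h.
case: (boolP (tag x == i)) => tx.
  have ty : tag y != i by rewrite -(eqP tx) eq_sym.
  by have := inN y ty; rewrite /f tx.
case: (boolP (tag y == i)) => ty.
  by apply: cart_sym => //; have := inN x tx; rewrite /f ty.
by rewrite (tj x tx) (tj y ty) eqxx in h.
Qed.

Theorem mainTheorem1 (d : nat) (n : 'I_d -> nat)
  (V1 V2 : finType) (e1 : rel V1) (e2 : rel V2) :
  2 <= d -> (forall i, 1 <= n i) ->
  simple_graph e1 -> simple_graph e2 ->
  0 < #|V1| -> 0 < #|V2| ->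
  subgraph_iso (@Kmp_rel d n) (cart_rel e1 e2) <->
  [\/ subgraph_iso (@Kmp_rel d n) e1 \/ subgraph_iso (@Kmp_rel d n) e2,
      d = 2 /\ (forall i, n i = 2) /\ has_edge e1 /\ has_edge e2
    | d = 2 /\ exists s, 1 <= s /\
        (exists i j : 'I_d, i != j /\ n i = 1 /\ n j = s) /\
        s <= maxdeg e1 + maxdeg e2].
Proof.
move=> d2 Hn s1 s2 c1 c2; split.
  case=> f [fi fe].
  have [d3|de] : 3 <= d \/ d = 2 by lia.
    by apply: Or31; apply: (fwd3 Hn d3 s1 s2 fi fe).
  subst d; exact: (fwd2 Hn s1 s2 fi fe).
case=> [[h|h] | [de [hn [h1 h2]]] | [de [s [hs1 [[i [j [nij [ni nj]]]] hs]]]]].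
- exact: bwd1.
- exact: bwd2.
- subst d; exact: bwd_sq.
- subst d; exact: (bwd_star s1 s2 c1 c2 nij ni nj hs).
Qed.
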